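(* Let $G=(V,E,\omega)\in\mathcal G$. For $i,j\in V$ let $\mathcal N(j)=\{k\in V:\omega_{jk}>0\}$ and $\mathcal N_s(i,j):=\sum_{k\in\mathcal N(j)}\omega_{ik}$. Then: (1) if for all $j\in V$ and all $i\in\mathcal N(j)$ we have $\omega_{ij}\,\mathcal M(\nu^{V\setminus\{j\}})\leq\mathrm{vol}(V)\,d_i^r$, then $G\in\mathcal C$; (2) if for all $j\in V$ and all $i\in V\setminus(\{j\}\cup\mathcal N(j))$ we have $\mathcal N_s(i,j)\,\mathcal M(\nu^{V\setminus\{j\}})\leq\mathrm{vol}(V)\,d_i^r$, then $G\in\mathcal C^0$.
   Context: $\mathcal{G}$ is the set of finite, simple, connected, undirected, edge-weighted graphs $G=(V,E,\omega)$ with $V=\{1,\dots,n\}$, $n\geq2$, weights $\omega_{ij}=\omega_{ji}>0$ on edges, $0$ otherwise. $d_i=\sum_j\omega_{ij}$. Fixed $r\in[0,1]$: for $u:V\to\mathbb R$, $(\Delta u)_i=d_i^{-r}\sum_j\omega_{ij}(u_i-u_j)$, $\mathcal M(u)=\sum_id_i^ru_i$, $\mathrm{vol}(V)=\sum_id_i^r$, $\mathcal A(u)=\frac{\mathcal M(u)}{\mathrm{vol}(V)}\chi_V$. Equilibrium measure $\nu^S$ ($S\subsetneq V$): unique $\nu$ with $(\Delta\nu)_i=1$ on $S$, $\nu=0$ off $S$. $f^j:=\nu^{V\setminus\{j\}}-\mathcal A(\nu^{V\setminus\{j\}})$. $\mathcal C=\{G\in\mathcal G:\forall j\ \forall i\neq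 j:\ f^j_i\geq0\}$; $\mathcal C^0=\{G\in\mathcal G:\forall j\ \forall i\neq j:\ \omega_{ij}>0\text{ or }f^j_i\geq0\}$. *)

(* Defs.v *)
From HB Require Import structures.
From mathcomp Require Import all_boot all_order all_algebra.
From mathcomp Require Import all_classical all_reals all_analysis.
From Stdlib Require Import ClassicalEpsilon.
Set Implicit Arguments. Unset Strict Implicit. Unset Printing Implicit Defensive.
Import Order.TTheory GRing.Theory Num.Theory.
Local Open Scope ring_scope.

Section Defs.
Context {R : realType} {n : nat}.
Implicit Types (w : 'I_n -> 'I_n -> R) (r : R) (u : 'I_n -> R).

Definition in_graph_class w : Prop :=
  [/\ (2 <= n)%N,
      (forall i j, w i j = w j i),
      (forall i j, 0 <= w i j),
      (forall i, w i i = 0) &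
      (forall i j, connect (fun a b => 0 < w a b) i j)].

Definition deg w (i : 'I_n) : R := \sum_j w i j.

Definition lap r w u (i : 'I_n) : R :=
  ((deg w i) `^ r)^-1 * \sum_j w i j * (u i - u j).

Definition mass r w u : R := \sum_i (deg w i) `^ r * u i.

Definition vol r w : R := \sum_i (deg w i) `^ r.

Definition is_equilibrium r w (S : {set 'I_n}) u : Prop :=
  (forall i, i \in S -> lap r w u i = 1) /\ (forall i, i \notin S -> u i = 0).

(* the (unique, for S a proper subset of a connected graph) equilibrium measure *)
Definition equilibrium r w (S : {set 'I_n}) : 'I_n -> R :=
  epsilon (inhabits (fun _ => 0)) (is_equilibrium r w S).

Definition nuc r w (j : 'I_n) : 'I_n -> R := equilibrium r w (~: [set j]).

Definition fj r w (j : 'I_n) : 'I_n -> R :=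
  fun i => nuc r w j i - mass r w (nuc r w j) / vol r w.

Definition in_C r w : Prop :=
  in_graph_class w /\ forall j i, i != j -> 0 <= fj r w j i.

Definition in_C0 r w : Prop :=
  in_graph_class w /\ forall j i, i != j -> 0 < w i j \/ 0 <= fj r w j i.

Definition Ns w (i j : 'I_n) : R := \sum_(k | 0 < w j k) w i k.

End Defs.

(* Main.v *)
Require Import Defs.
From HB Require Import structures.
From mathcomp Require Import all_boot all_order all_algebra.
From mathcomp Require Import all_classical all_reals all_analysis.
From Stdlib Require Import ClassicalEpsilon.
Import Order.TTheory GRing.Theory Num.Theory.
Local Open Scope ring_scope.

Lemma exists_min (R : realType) (T : finType) (P : pred T) (F : T -> R) i0 :
  P i0 -> exists i, P i /\ forall k, P k -> F i <= F k.
Proof.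
move=> Pi0; case: (@arg_minP _ R T i0 P F Pi0) => i Pi H.
by exists i; split.
Qed.

Lemma deg_pos (R : realType) n (w : 'I_n -> 'I_n -> R) :
  in_graph_class w -> forall i, 0 < deg w i.
Proof.
case=> n2 sym nn diag conn i.
have [k ki] : exists k : 'I_n, k != i.
  have h0 : (0 < n)%N by apply: leq_trans n2.
  have h1 : (1 < n)%N by [].
  case: (eqVneq (Ordinal h0) i) => [<-|]; last by exists (Ordinal h0).
  by exists (Ordinal h1).
move: (conn i k) => /connectP [p].
case: p => [_ /= ki'|y p /= /andP [wy _] _]; first by rewrite ki' eqxx in ki.
rewrite /deg (bigD1 y) //= ltr_pwDl //; apply: sumr_ge0 => *; exact: nn.
Qed.

Lemma lap_sum (R : realType) n (w : 'I_n -> 'I_n -> R) (u : 'I_n -> R) k :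
  \sum_i w k i * (u k - u i) = deg w k * u k - \sum_i w k i * u i.
Proof.
rewrite /deg mulr_suml -sumrB; apply: eq_bigr => i _; by rewrite mulrBr.
Qed.

Lemma maxp (R : realType) n (w : 'I_n -> 'I_n -> R) (j : 'I_n) (v : 'I_n -> R) :
  in_graph_class w ->
  (forall k, k != j -> \sum_i w k i * (v k - v i) = 0) -> v j = 0 ->
  forall i, v i <= 0.
Proof.
move=> G; case: (G) => n2 sym nn diag conn harm vj.
have [m [_ Hm]] := @exists_min R _ predT (fun i => - v i) j isT.
have Hm' : forall k, v k <= v m by move=> k; rewrite -lerN2; apply: Hm.
suff : v m = 0 by move=> vm0 i; rewrite -vm0.
have key : forall p x, path (fun a b => 0 < w a b) x p -> last x p = j ->
   v x = v m -> v m = 0.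
  elim=> [|y p IH] x /=; first by move=> _ -> <-.
  move=> /andP [wxy pth] lst vx.
  have [xj0|xj] := eqVneq x j; first by rewrite -vx xj0.
  apply: (IH y pth lst).
  have := harm x xj.
  move/eqP; rewrite psumr_eq0 => [/allP /(_ y (mem_index_enum _)) /implyP /(_ isT)|].
    rewrite mulf_eq0 (gt_eqF wxy) /= subr_eq0 => /eqP <-; done.
  move=> i _; apply: mulr_ge0; first exact: nn.
  by rewrite subr_ge0 vx.
have /connectP [p pth lst] := conn m j.
exact: (key p m pth (esym lst) erefl).
Qed.

Lemma sum_delta (R : realType) n (v : 'I_n -> R) (k : 'I_n) c :
  \sum_i v i * (if i == k then c else 0) = v k * c.
Proof.
rewrite (bigD1 k) //= eqxx big1 ?addr0 // => i /negPf ->; by rewrite mulr0.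
Qed.

Lemma exist_eq (R : realType) n (r : R) (w : 'I_n -> 'I_n -> R) (j : 'I_n) :
  in_graph_class w -> exists u, is_equilibrium r w (~: [set j]) u.
Proof.
move=> G.
pose A : 'M[R]_n := \matrix_(i, k) (if k != j then
   (if i == k then deg w k else 0) - w k i else (if i == k then 1 else 0)).
have vA : forall v : 'rV[R]_n, forall k, (v *m A) 0 k =
   if k != j then deg w k * v 0 k - \sum_i w k i * v 0 i else v 0 k.
  move=> v k; rewrite mxE.
  under eq_bigr => i _ do rewrite mxE.
  case: (k != j).
    under eq_bigr => i _ do rewrite mulrBr.
    by rewrite sumrB sum_delta mulrC; congr (_ - _); apply: eq_bigr => i _; rewrite mulrC.
  by rewrite sum_delta mulr1.
have uA : A \in unitmx.
  rewrite unitmxE unitfE; apply/negP => /det0P [v v0 vA0].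
  apply: (negP v0); apply/eqP/rowP => i; rewrite mxE.
  have h0 : forall k, (v *m A) 0 k = 0 by move=> k; rewrite vA0 mxE.
  have harm : forall k, k != j -> \sum_i w k i * (v 0 k - v 0 i) = 0.
    move=> k kj; rewrite (@lap_sum R n w (fun i => v 0 i)).
    have := h0 k; rewrite vA kj; done.
  have vj : v 0 j = 0 by rewrite -(h0 j) vA eqxx.
  apply/eqP; rewrite eq_le; apply/andP; split.
    exact: (@maxp R n w j (fun i => v 0 i) G harm vj).
  rewrite -oppr_le0.
  apply: (@maxp R n w j (fun i => - v 0 i) G) => //; last by rewrite vj oppr0.
  move=> k kj; rewrite /=.
  transitivity (- \sum_i w k i * (v 0 k - v 0 i)); last by rewrite harm // oppr0.
  rewrite -sumrN; apply: eq_bigr => i0 _.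
  by rewrite -mulrN opprB opprK addrC.
pose b : 'rV[R]_n := \row_k (if k != j then (deg w k) `^ r else 0).
pose x := b *m invmx A.
have xA : x *m A = b by rewrite /x mulmxKV.
exists (fun i => x 0 i); split.
  move=> k; rewrite !inE => kj.
  rewrite /lap lap_sum.
  have := vA x k; rewrite kj xA mxE kj => <-.
  by rewrite mulVf // gt_eqF // powR_gt0 // deg_pos.
move=> k; rewrite !inE negbK => /eqP ->.
by have := vA x j; rewrite eqxx xA mxE eqxx.
Qed.

Lemma nuc_spec (R : realType) n (r : R) (w : 'I_n -> 'I_n -> R) (j : 'I_n) :
  in_graph_class w -> nuc r w j j = 0 /\
  forall k, k != j -> \sum_i w k i * (nuc r w j k - nuc r w j i) = deg w k `^ r.
Proof.
move=> G.
have [H1 H2] := epsilon_spec (inhabits (fun _ => 0))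
   (is_equilibrium r w (~: [set j])) (@exist_eq R n r w j G).
split; first by apply: H2; rewrite !inE negbK.
move=> k kj; have := H1 k; rewrite !inE kj => /(_ isT).
rewrite /lap /nuc /equilibrium => H.
have nz : deg w k `^ r != 0 by rewrite gt_eqF // powR_gt0 // deg_pos.
by rewrite -[LHS](mulVKf nz) H mulr1.
Qed.

Lemma keymin (R : realType) n (r : R) (w : 'I_n -> 'I_n -> R) (j : 'I_n) (u : 'I_n -> R) :
  in_graph_class w -> u j = 0 ->
  (forall k, k != j -> \sum_i w k i * (u k - u i) = deg w k `^ r) ->
  exists i1, [/\ i1 != j, 0 < w i1 j, (forall k, k != j -> u i1 <= u k) &
     deg w i1 `^ r <= w i1 j * u i1].
Proof.
move=> G uj H; case: (G) => n2 sym nn diag conn.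
have [k0 k0j] : exists k : 'I_n, k != j.
  have h0 : (0 < n)%N by apply: leq_trans n2.
  have h1 : (1 < n)%N by [].
  case: (eqVneq (Ordinal h0) j) => [<-|]; last by exists (Ordinal h0).
  by exists (Ordinal h1).
have [i1 [i1j Hmin]] := @exists_min R _ (fun k => k != j) u k0 k0j.
have Dpos : 0 < deg w i1 `^ r by rewrite powR_gt0 // deg_pos.
have le1 : deg w i1 `^ r <= w i1 j * u i1.
  rewrite -(H i1 i1j) (bigD1 j) //= uj subr0 -[X in _ <= X]addr0 lerD2l.
  apply: sumr_le0 => i ij; apply: mulr_ge0_le0; first exact: nn.
  by rewrite subr_le0; apply: Hmin.
exists i1; split => //.
rewrite lt_def nn andbT; apply/negP => /eqP w0.
by move: le1; rewrite w0 mul0r leNgt Dpos.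
Qed.

Theorem lemma6p6 (R : realType) (n : nat) (r : R) (w : 'I_n -> 'I_n -> R) :
  0 <= r -> r <= 1 -> in_graph_class w ->
  ((forall j i : 'I_n, 0 < w j i ->
      w i j * mass r w (nuc r w j) <= vol r w * (deg w i) `^ r) ->
    in_C r w) /\
  ((forall j i : 'I_n, i != j -> ~~ (0 < w j i) ->
      Ns w i j * mass r w (nuc r w j) <= vol r w * (deg w i) `^ r) ->
    in_C0 r w).
Proof.
move=> r0 r1 G; case: (G) => n2 sym nn diag conn.
have h0 : (0 < n)%N by apply: leq_trans n2.
have Vpos : 0 < vol r w.
  rewrite /vol (bigD1 (Ordinal h0)) //= ltr_pwDl ?powR_gt0 ?deg_pos //.
  by apply: sumr_ge0 => *; apply: powR_ge0.
have Dpos : forall k, 0 < deg w k `^ r by move=> k; rewrite powR_gt0 ?deg_pos.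
have common : forall j, exists i1, [/\ i1 != j, 0 < w i1 j,
    (forall k, k != j -> nuc r w j i1 <= nuc r w j k),
    deg w i1 `^ r <= w i1 j * nuc r w j i1 &
    forall k, 0 <= nuc r w j k].
  move=> j; have [uj Hu] := @nuc_spec R n r w j G.
  have [i1 [i1j wpos Hmin le1]] := @keymin R n r w j _ G uj Hu.
  exists i1; split => // k.
  have ui1 : 0 < nuc r w j i1.
    have : 0 < w i1 j * nuc r w j i1 by apply: lt_le_trans le1.
    by rewrite pmulr_rgt0.
  have [-> | kj] := eqVneq k j; first by rewrite uj.
  by apply: le_trans (Hmin k kj); apply: ltW.
have fj_ge : forall j i, mass r w (nuc r w j) <= nuc r w j i * vol r w ->
    0 <= fj r w j i.
  by move=> j i H; rewrite /fj subr_ge0 ler_pdivrMr.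
split.
  move=> hyp; split => // j i ij; apply: fj_ge.
  have [i1 [i1j wpos Hmin le1 upos]] := common j.
  have := hyp j i1; rewrite sym => /(_ wpos) h.
  have h2 : w i1 j * mass r w (nuc r w j) <= w i1 j * (nuc r w j i1 * vol r w).
    apply: le_trans h _; rewrite mulrA [vol r w * _]mulrC.
    by apply: ler_wpM2r => //; exact: ltW.
  rewrite ler_pM2l // in h2; apply: le_trans h2 _.
  by apply: ler_wpM2r; [apply: ltW | apply: Hmin].
move=> hyp; split => // j i ij.
have [wij|nw] := boolP (0 < w i j); first by left.
right; apply: fj_ge.
have [i1 [i1j wpos Hmin le1 upos]] := common j.
have [uj Hu] := @nuc_spec R n r w j G.
have Ti : (i != j) && ~~ (0 < w j i) by rewrite ij sym nw.
have [i0 [/andP [i0j nwi0] Hm]] := @exists_min R _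
   (fun k => (k != j) && ~~ (0 < w j k)) (nuc r w j) i Ti.
have wji0 : w j i0 = 0.
  by apply/eqP; rewrite eq_le nn andbT leNgt.
have le2 : deg w i0 `^ r <= Ns w i0 j * nuc r w j i0.
  rewrite -(Hu i0 i0j) /Ns mulr_suml [X in _ <= X]big_mkcond /=; apply: ler_sum => k _.
  case: ifP => wjk.
    apply: ler_wpM2l; first exact: nn.
    by rewrite gerDl oppr_le0.
  have [-> | kj] := eqVneq k j; first by rewrite sym wji0 mul0r.
  apply: mulr_ge0_le0; first exact: nn.
  by rewrite subr_le0; apply: Hm; rewrite kj wjk.
have Nsge : 0 <= Ns w i0 j by apply: sumr_ge0 => *; apply: nn.
have Nspos : 0 < Ns w i0 j.
  rewrite lt_def Nsge andbT; apply/negP => /eqP N0.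
  by move: le2; rewrite N0 mul0r leNgt Dpos.
have h := hyp j i0 i0j nwi0.
have h2 : Ns w i0 j * mass r w (nuc r w j) <=
          Ns w i0 j * (nuc r w j i0 * vol r w).
  apply: le_trans h _; rewrite mulrA [vol r w * _]mulrC.
  by apply: ler_wpM2r => //; exact: ltW.
rewrite ler_pM2l // in h2; apply: le_trans h2 _.
by apply: ler_wpM2r; [apply: ltW | apply: Hm].
Qed.
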